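(* Consider the two-bidder simultaneous sealed-bid auction of $n\ge2$ objects described in the context. Suppose ${\mathcal B}$'s random bid vector $(b_1,\dots,b_n)$ satisfies $\sum_i b_i=1$ and each $b_i$ has cumulative distribution function $F_2$, where $F_2(x)=\frac{n}{2}x$ for $x\in[0,\frac{2}{n}]$ and $F_2(x)=1$ for $x\in(\frac2n,1]$. Then the maximum, over all (possibly randomized, independent of ${\mathcal B}$'s bids) bid vectors $(a_1,\dots,a_n)$ of ${\mathcal A}$ with positive entries and $\sum a_i\le 1$, of the expected number of objects won by ${\mathcal A}$ equals exactly $n/2$.
   Context: Auction model: $n$ objects are auctioned simultaneously to two bidders ${\mathcal B}$ and ${\mathcal A}$; each has budget $1$ and submits a vector of bids (one per object) with sum at most $1$. Each object is won by the higher bidder on it; in case of a tie each wins with probability $1/2$. ${\mathcal A}$ knows ${\mathcal B}$'s bidding algorithm (the distribution of his bids) but not the realized bids. *)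

(* Defs.v *)
From HB Require Import structures.
From mathcomp Require Import all_boot all_order all_algebra.
From mathcomp Require Import all_classical all_reals all_analysis.
Set Implicit Arguments. Unset Strict Implicit. Unset Printing Implicit Defensive.
Import Order.TTheory GRing.Theory Num.Theory.
Local Open Scope ring_scope.

Definition F2 (R : realType) (n : nat) (x : R) : R :=
  if x <= 2 / n%:R then n%:R / 2 * x else 1.

(* Number of "objects" won by A on one object when A bids x and B bids y:
   1 if A bids higher, 1/2 on a tie (win with probability 1/2), 0 otherwise. *)
Definition win (R : realType) (x y : R) : R :=
  if y < x then 1 else if x == y then 1 / 2 else 0.

(* Expected number of objects won by A, where B's bids b live on (Ω,P), A's
   (randomized) bids a live on (Ω',Q), and independence is modelled by the
   product probability P \x Q. *)
Definition expected_wins (R : realType) (n : nat)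
  (d : measure_display) (Om : measurableType d) (P : probability Om R)
  (d' : measure_display) (Om' : measurableType d') (Q : probability Om' R)
  (b : 'I_n -> Om -> R) (a : 'I_n -> Om' -> R) : \bar R :=
  (\int[(P \x Q)%E]_w (\sum_(i < n) win (a i w.2) (b i w.1))%:E)%E.

(* Main.v *)
Require Import Defs.
From HB Require Import structures.
From mathcomp Require Import all_boot all_order all_algebra.
From mathcomp Require Import all_classical all_reals all_analysis.
From mathcomp Require Import measurable_realfun.
From mathcomp Require Import ring lra.
Import Order.TTheory GRing.Theory Num.Theory.
Local Open Scope ring_scope.
Local Open Scope classical_set_scope.

Section helpers.
Context {R : realType}.

Lemma win_ge0 (x y : R) : 0 <= win x y.
Proof. rewrite /win; case: ifP => // _; case: ifP => // _. Qed.

Lemma win_le_indic (c y : R) : win c y <= \1_[set z | z <= c] y.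
Proof.
rewrite /win indicE; case: ifP => [yc|_].
  by rewrite (_ : y \in _ = true) //; apply/mem_set => /=; exact: ltW.
case: ifP => [/eqP <-|_]; last by case: (y \in _).
rewrite (_ : c \in _ = true) //; last by apply/mem_set => /=.
by rewrite ler_pdivrMr // mul1r ler1n.
Qed.

Lemma win_ge_indic (c c' y : R) : c' < c -> \1_[set z | z <= c'] y <= win c y.
Proof.
move=> cc; rewrite /win indicE.
have [yc|_] := boolP (y \in [set z | z <= c']).
  by move: yc; rewrite inE /= => yc; rewrite (le_lt_trans yc cc).
exact: (win_ge0 c y).
Qed.

Context {d} {Om : measurableType d} {P : probability Om R}.

Lemma mset_le (X : {RV P >-> R}) (c : R) : measurable [set w | X w <= c].
Proof.
have := measurable_funPT X measurableT _ (measurable_itv `]-oo, c]%R).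
rewrite setTI (_ : [set w | X w <= c] = X @^-1` `]-oo, c]) //.
Qed.

Lemma mwin d' (T : measurableType d') (f g : T -> R) :
  measurable_fun setT f -> measurable_fun setT g ->
  measurable_fun setT (fun w => win (f w) (g w)).
Proof.
move=> mf mg; rewrite /win.
apply: measurable_fun_ifT; first exact: measurable_fun_ltr.
  exact: measurable_cst.
apply: measurable_fun_ifT; first exact: measurable_fun_eqr.
  exact: measurable_cst.
exact: measurable_cst.
Qed.

Lemma inner_le (X : {RV P >-> R}) (c : R) :
  (\int[P]_w (win c (X w))%:E <= P [set w | (X w <= c)%R])%E.
Proof.
rewrite -(setIT [set w | (X w <= c)%R]) -integral_indic //; last exact: mset_le.
apply: ge0_le_integral => //.
- by move=> w _; rewrite lee_fin win_ge0.
- apply/measurable_EFinP; apply: mwin => //; exact: measurable_cst.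
- apply/measurable_EFinP; apply/measurable_indic; exact: mset_le.
- by move=> w _; rewrite lee_fin win_le_indic.
Qed.

Lemma inner_ge (X : {RV P >-> R}) (c c' : R) : c' < c ->
  (P [set w | (X w <= c')%R] <= \int[P]_w (win c (X w))%:E)%E.
Proof.
move=> cc.
rewrite -(setIT [set w | (X w <= c')%R]) -integral_indic //; last exact: mset_le.
apply: ge0_le_integral => //.
- apply/measurable_EFinP; apply/measurable_indic; exact: mset_le.
- apply/measurable_EFinP; apply: mwin => //; exact: measurable_cst.
- by move=> w _; rewrite lee_fin win_ge_indic.
Qed.
Lemma ew_eq n d' (Om' : measurableType d') (Q : probability Om' R)
  (b : 'I_n -> {RV P >-> R}) (a : 'I_n -> {RV Q >-> R}) :
  let f := fun w : Om * Om' => (\sum_(i < n) win (a i w.2) (b i w.1))%:E in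
  measurable_fun setT f /\ (forall w, (0 <= f w)%E) /\
  expected_wins P Q (fun i => b i) (fun i => a i) = (\int[Q]_y fubini_G P f y)%E /\
  (forall y, fubini_G P f y = \sum_(i < n) \int[P]_x (win (a i y) (b i x))%:E)%E.
Proof.
move=> f.
have mf : measurable_fun setT f.
  rewrite /f; under eq_fun do rewrite -sumEFin.
  apply: emeasurable_sum => i; apply/measurable_EFinP; apply: mwin.
  - exact: measurableT_comp (measurable_funPT (a i)) measurable_snd.
  - exact: measurableT_comp (measurable_funPT (b i)) measurable_fst.
have f0 : forall w, (0 <= f w)%E.
  by move=> w; rewrite lee_fin; apply: sumr_ge0 => i _; exact: win_ge0.
split=> //; split=> //; split.
  by rewrite /expected_wins (fubini_tonelli2 f).
move=> y; rewrite /fubini_G /f /=.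
under eq_integral do rewrite -sumEFin.
rewrite ge0_integral_sum //.
- by move=> i; apply/measurable_EFinP; apply: mwin.
- by move=> i x _; rewrite lee_fin win_ge0.
Qed.
End helpers.

Theorem lemma2p2 (R : realType) (n : nat) (hn : (2 <= n)%N)
  (d : measure_display) (Om : measurableType d) (P : probability Om R)
  (b : 'I_n -> {RV P >-> R})
  (hbsum : forall w, \sum_(i < n) b i w = 1)
  (hbcdf : forall (i : 'I_n) (x : R), 0 <= x <= 1 ->
      P [set w | b i w <= x] = (F2 n x)%:E) :
  (forall (d' : measure_display) (Om' : measurableType d')
          (Q : probability Om' R) (a : 'I_n -> {RV Q >-> R}),
      (forall i w, 0 < a i w) -> (forall w, \sum_(i < n) a i w <= 1) ->
      (expected_wins P Q (fun i => b i) (fun i => a i) <= (n%:R / 2)%:E)%E)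
  /\
  (exists (d' : measure_display) (Om' : measurableType d')
          (Q : probability Om' R) (a : 'I_n -> {RV Q >-> R}),
      (forall i w, 0 < a i w) /\ (forall w, \sum_(i < n) a i w <= 1) /\
      expected_wins P Q (fun i => b i) (fun i => a i) = (n%:R / 2)%:E).
Proof.
have N2 : (2 <= n%:R :> R) by rewrite (ler_nat R 2 n).
set N : R := n%:R in N2 *.
have N0 : 0 < N by lra.
have NM : N * N^-1 = 1 by rewrite mulfV // gt_eqF.
have M0 : 0 < N^-1 by rewrite invr_gt0.
have F2le x : 0 <= x -> F2 n x <= N / 2 * x.
  move=> x0; rewrite /F2 -/N; case: ifP => // /negbT; rewrite -ltNge => hx.
  have : 2 < x * N by rewrite -ltr_pdivrMr.
  nra.
split.
- move=> d' Om' Q a apos asum.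
  have [mf [f0 [-> Gy]]] := ew_eq n _ _ Q b a.
  apply: (@le_trans _ _ (\int[Q]_y (N/2)%:E)%E).
    apply: ge0_le_integral => //.
    + by move=> y _; apply: integral_ge0 => x _; exact: f0.
    + exact: (measurable_fun_fubini_tonelli_G _ mf f0).
    + move=> y _; rewrite Gy.
      apply: (@le_trans _ _ (\sum_(i<n) (N/2 * a i y)%:E)%E).
        apply: lee_sum => i _; apply: le_trans (inner_le _ _) _.
        rewrite hbcdf; first by rewrite lee_fin; apply: F2le; exact/ltW.
        apply/andP; split; first exact/ltW.
        apply: le_trans (asum y); rewrite (bigD1 i) //= lerDl.
        by apply: sumr_ge0 => j _; exact/ltW.
      rewrite sumEFin lee_fin -mulr_sumr; apply: ler_piMr => //; lra.
  rewrite integral_cst // [X in (_ * X)%E](_ : _ = 1%E) ?mule1 //; exact: probability_setT.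
- exists d, Om, P, (fun _ => cst (N^-1) : {RV P >-> R}).
  split; first by move=> i w /=.
  split; first by move=> w /=; rewrite sumr_const card_ord -mulr_natr mulrC NM.
  have [mf [f0 [-> Gy]]] := ew_eq n _ _ P b (fun _ => cst (N^-1) : {RV P >-> R}).
  have inner i : (\int[P]_x (win (N^-1) (b i x))%:E = (1/2)%:E)%E.
    have c01 : 0 <= N^-1 <= 1 by apply/andP; split; nra.
    have F2v : F2 n (N^-1) = 1/2.
      rewrite /F2 -/N ifT; last by nra.
      by field; rewrite gt_eqF.
    apply/eqP; rewrite eq_le; apply/andP; split.
      by apply: le_trans (inner_le _ _) _; rewrite hbcdf // F2v.
    apply/lee_addgt0Pr => e e0.
    have I0 : (0 <= \int[P]_x (win (N^-1) (b i x))%:E)%E.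
      by apply: integral_ge0 => x _; rewrite lee_fin win_ge0.
    have [he|he] := lerP (1/2) e.
      by apply: lee_paddl => //; rewrite lee_fin.
    have cc : N^-1 - e * N^-1 < N^-1 by nra.
    apply: le_trans _ (leeD2r _ (inner_ge (b i) _ _ cc)).
    have c'01 : 0 <= N^-1 - e * N^-1 <= 1 by apply/andP; split; nra.
    rewrite hbcdf // /F2 -/N ifT; last by nra.
    rewrite -EFinD lee_fin.
    have -> : N / 2 * (N^-1 - e * N^-1) = (N * N^-1) / 2 * (1 - e) by ring.
    rewrite NM; lra.
  rewrite (eq_integral (fun _ => (N/2)%:E)); last first.
    move=> y _; rewrite Gy /=.
    under eq_bigr do rewrite inner.
    by rewrite sumEFin sumr_const card_ord -mulr_natr; congr (_%:E); rewrite -/N; lra.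
  rewrite integral_cst // [X in (_ * X)%E](_ : _ = 1%E) ?mule1 //; exact: probability_setT.
Qed.
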